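(* Let $G=K\rtimes_\phi H$ be a finite Frobenius group with kernel $K$ and complement $H$, where $\phi:H\to\mathrm{Aut}(K)$ is the action, $H$ is identified with a subgroup of $G$, and $\pi:G\to H$ is the quotient map with kernel $K$. Let $\sigma\in\mathrm{Aut}(K)$ and $\gamma\in\mathrm{Aut}(H)$. Then there exists $\alpha\in\mathrm{Aut}(G)$ with $\alpha|_K=\sigma$ and $\pi\circ\alpha|_H=\gamma$ if and only if for every $h\in H$ the automorphism $\sigma\circ\phi(h)\circ\sigma^{-1}\circ\phi(\gamma(h))^{-1}$ of $K$ lies in $\mathrm{Inn}(K)$.
   Context: A finite group $G=K\rtimes_\phi H$ with $K,H$ nontrivial is a Frobenius group with kernel $K$ and complement $H$ if for every $h\in H$, $h\neq1$, the automorphism $\phi(h)$ fixes no nonidentity element of $K$. $\mathrm{Inn}(K)$ denotes the group of inner automorphisms of $K$. *)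

(* Defs.v *)
From HB Require Import structures.
From mathcomp Require Import all_boot all_fingroup.
Set Implicit Arguments. Unset Strict Implicit. Unset Printing Implicit Defensive.
Local Open Scope group_scope.

(* Internal view of G = K ><|_phi H : the action phi(h) is k |-> h k h^-1. *)
Definition phi_act (gT : finGroupType) (h : gT) : gT -> gT := fun k => h * k * h^-1.
Definition phi_act_inv (gT : finGroupType) (h : gT) : gT -> gT := fun k => h^-1 * k * h.

Definition frobenius_sdprod (gT : finGroupType) (G K H : {group gT}) : Prop :=
  [/\ K ><| H = G, K :!=: 1, H :!=: 1 &
      forall h, h \in H -> h != 1 ->
        forall k, k \in K -> phi_act h k = k -> k = 1].

(* The quotient map pi : G -> H with kernel K (g = k * pi g, k in K). *)
Definition pi_map (gT : finGroupType) (K H : {set gT}) (g : gT) : gT := remgr K H g.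

Definition is_inner_on (gT : finGroupType) (K : {set gT}) (f : gT -> gT) : Prop :=
  exists2 x, x \in K & forall k, k \in K -> f k = x * k * x^-1.

(* Main.v *)
Require Import Defs.
From HB Require Import structures.
From mathcomp Require Import all_boot all_fingroup all_solvable.
Local Open Scope group_scope.

Theorem theorem3p3 (gT : finGroupType) (G K H : {group gT})
  (sigma gamma : {perm gT}) :
  frobenius_sdprod G K H ->
  sigma \in Aut K -> gamma \in Aut H ->
  (exists2 alpha : {perm gT}, alpha \in Aut G &
     (forall k, k \in K -> alpha k = sigma k) /\
     (forall h, h \in H -> pi_map K H (alpha h) = gamma h))
  <->
  (forall h, h \in H ->
     is_inner_on K (fun k => sigma (phi_act h ((sigma^-1)%g (phi_act_inv (gamma h) k))))).
Proof.
case=> defG ntK ntH frobH AutS AutG.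
have [_ eKH nKH tiKH] := sdprodP defG.
have sKG : K \subset G by rewrite -eKH mulG_subl.
have sHG : H \subset G by rewrite -eKH mulG_subr.
have nsKG : K <| G by case/sdprod_context: defG.
have AutSi : (sigma^-1)%g \in Aut K by rewrite groupV.
have AutGi : (gamma^-1)%g \in Aut H by rewrite groupV.
have SK : forall k, k \in K -> sigma k \in K by move=> k; apply: Aut_closed.
have SiK : forall k, k \in K -> (sigma^-1)%g k \in K by move=> k; apply: Aut_closed.
have GH : forall h, h \in H -> gamma h \in H by move=> h; apply: Aut_closed.
have SM : {in K &, {morph sigma : x y / x * y}} by apply/morphicP/Aut_morphic.
have GM : {in H &, {morph gamma : x y / x * y}} by apply/morphicP/Aut_morphic.
have JK : forall h k, h \in H -> k \in K -> h * k * h^-1 \in K.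
  move=> h k Hh Kk; have -> : h * k * h^-1 = k ^ h^-1 by rewrite conjgE invgK mulgA.
  by rewrite memJ_norm // groupV; apply: (subsetP nKH).
have JKi : forall h k, h \in H -> k \in K -> h^-1 * k * h \in K.
  by move=> h k Hh Kk; have := JK h^-1 k; rewrite invgK groupV; apply.
split.
  case=> alpha AutA [aK aH] h Hh.
  have AM : {in G &, {morph alpha : x y / x * y}} by apply/morphicP/Aut_morphic.
  have Gah : alpha h \in G by apply: Aut_closed => //; apply: (subsetP sHG).
  exists (divgr K H (alpha h)); first by rewrite mem_divgr // eKH.
  move=> k Kk.
  have ah : alpha h = divgr K H (alpha h) * gamma h by rewrite -aH // -divgr_eq.
  set x := divgr K H (alpha h) in ah *.
  set k' := (sigma^-1)%g _.
  have Kk' : k' \in K by rewrite SiK // /phi_act_inv JKi ?GH.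
  have Gh : h \in G by apply: (subsetP sHG).
  have Gk' : k' \in G by apply: (subsetP sKG).
  have aV : alpha h^-1 = (alpha h)^-1.
    apply: (mulgI (alpha h)); rewrite -AM ?groupV // !mulgV.
    by apply: (morph1 (autm AutA)).
  rewrite /phi_act -aK ?JK // !AM ?groupM ?groupV // (aK k') // /k' permKV aV ah.
  by rewrite /phi_act_inv invMg !mulgA !mulgK.
move=> inner.
pose Pin h x := [forall k in K, sigma (phi_act h ((sigma^-1)%g (phi_act_inv (gamma h) k))) == x * k * x^-1].
pose xs h := odflt 1 [pick x in K | Pin h x].
have Exs : forall h, h \in H -> xs h \in K /\
    forall k, k \in K -> sigma (phi_act h ((sigma^-1)%g (phi_act_inv (gamma h) k))) = xs h * k * (xs h)^-1.
  move=> h Hh; rewrite /xs; case: pickP => [x /andP[Kx /forall_inP Px] | none] /=.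
    by split=> // k Kk; apply/eqP/Px.
  have [x Kx Ex] := inner h Hh.
  have := none x; rewrite Kx /=; move/negP; case.
  by apply/forall_inP => k Kk; rewrite Ex.
pose pi := remgr K H.
have complH : H \in [complements to K in G] by apply/complP.
have piM : {in G &, {morph pi : x y / x * y}} by apply: remgrM.
have piKH : forall k h, k \in K -> h \in H -> pi (k * h) = h by move=> k h; apply: remgrMid.
have piH : forall g, g \in G -> pi g \in H by move=> g Gg; apply: mem_remgr; rewrite eKH.
have piK : forall g, g \in G -> pi g = 1 -> g \in K.
  move=> g Gg e; rewrite (divgr_eq K H g) -/pi e mulg1 mem_divgr // eKH //.
have pi1 : pi 1 = 1 by apply: remgr1.
have piV : forall g, g \in G -> pi g^-1 = (pi g)^-1.
  move=> g Gg; apply: (mulIg (pi g)); rewrite -piM ?groupV // !mulVg //.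
have G1 : gamma 1 = 1.
  by apply: (mulgI (gamma 1)); rewrite -GM // !mulg1.
pose Mset := [set g in G | [exists h in H, (pi g == gamma h) &&
                 [forall k in K, sigma (h * k * h^-1) == g * sigma k * g^-1]]].
have mkM : forall g h, g \in G -> h \in H -> pi g = gamma h ->
    (forall k, k \in K -> sigma (h * k * h^-1) = g * sigma k * g^-1) -> g \in Mset.
  move=> g h Gg Hh pg Eg; rewrite inE Gg /=; apply/exists_inP; exists h => //.
  by rewrite pg eqxx /=; apply/forall_inP => k Kk; rewrite Eg.
have MG : forall g, g \in Mset -> g \in G by move=> g; rewrite inE => /andP[].
have MP : forall g h, g \in Mset -> h \in H -> pi g = gamma h ->
    forall k, k \in K -> sigma (h * k * h^-1) = g * sigma k * g^-1.
  move=> g h; rewrite inE => /andP[Gg /exists_inP[h' Hh' /andP[/eqP pg /forall_inP Eg]]] Hh e.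
  have eh : h' = h by apply: (@perm_inj _ gamma); rewrite -pg.
  by move=> k Kk; apply/eqP; rewrite -eh Eg.
have MH : forall g, g \in Mset -> exists2 h, h \in H & pi g = gamma h.
  move=> g; rewrite inE => /andP[Gg /exists_inP[h' Hh' /andP[/eqP pg _]]].
  by exists h'.
have Mgrp : group_set Mset.
  apply/group_setP; split.
    apply: (mkM 1 1) => //; first by rewrite pi1 G1.
    by move=> k Kk; rewrite !(invg1, mulg1, mul1g).
  move=> g1 g2 M1 M2.
  have [h1 H1 p1] := MH _ M1; have [h2 H2 p2] := MH _ M2.
  apply: (mkM _ (h1 * h2)); rewrite ?groupM ?MG //.
    by rewrite piM ?MG // p1 p2 GM.
  move=> k Kk.
  have -> : h1 * h2 * k * (h1 * h2)^-1 = h1 * (h2 * k * h2^-1) * h1^-1.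
    by rewrite invMg !mulgA.
  by rewrite (MP g1 h1) ?JK // (MP g2 h2) // invMg !mulgA.
pose M := Group Mgrp.
have sMG : M \subset G by apply/subsetP => g; apply: MG.
have MK : forall h, h \in H -> xs h * gamma h \in M.
  move=> h Hh; have [Kx Ex] := Exs h Hh.
  apply: (mkM _ h) => //.
  - by apply: groupM; [apply: (subsetP sKG) | apply: (subsetP sHG); apply: GH].
  - by rewrite piKH ?GH.
  move=> k Kk; have := Ex (gamma h * sigma k * (gamma h)^-1).
  rewrite JK ?GH ?SK // /phi_act_inv !mulgA mulVg mul1g mulgKV permK /phi_act => -> //.
  by rewrite invMg !mulgA.
have eMK : M * K = G.
  apply/eqP; rewrite eqEsubset; apply/andP; split.
    by rewrite -(mulGid G); apply: mulgSS.
  apply/subsetP => g Gg.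
  pose h0 := (gamma^-1)%g (pi g).
  have Hh0 : h0 \in H by apply: Aut_closed => //; apply: piH.
  have Mm := MK h0 Hh0.
  rewrite -(mulKVg (xs h0 * gamma h0) g); apply: mem_mulg => //.
  apply: piK; first by rewrite groupM ?groupV // (subsetP sMG).
  have Gm : xs h0 * gamma h0 \in G by apply: (subsetP sMG).
  rewrite piM ?groupV // piV //.
  by rewrite piKH ?GH ?(proj1 (Exs h0 Hh0)) // /h0 permKV mulVg.
pose N := (M :&: K)%G.
have nsNM : N <| M by exact: normalGI sMG nsKG.
have cardM : #|M| = (#|N| * #|H|)%N.
  have := mul_cardG M K; rewrite eMK -(sdprod_card defG) => e.
  apply/eqP; rewrite -(eqn_pmul2r (cardG_gt0 K)); apply/eqP.
  by rewrite e [RHS]mulnC mulnA mulnAC.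
have idxMN : #|M : N| = #|H|.
  have := Lagrange (normal_sub nsNM); rewrite cardM => e.
  by apply/eqP; rewrite -(eqn_pmul2l (cardG_gt0 N)); apply/eqP.
have semiH : semiregular K H.
  move=> x; rewrite !inE => /andP[ntx Hx]; apply/trivgP/subsetP => k /setIP[Kk ckx].
  rewrite inE; apply/eqP; apply: (frobH x Hx ntx k Kk).
  by rewrite /phi_act -(cent1P ckx) mulgK.
have copKH : coprime #|K| #|H| by apply: regular_norm_coprime.
have hallN : Hall M N.
  by rewrite /Hall normal_sub //= idxMN (coprime_dvdl (cardSg (subsetIr M K))).
have [B /complP [tiNB eNB]] := splitsP (SchurZassenhaus_split hallN nsNM).
have complB : B \in [complements to N in M] by apply/complP.
have sBM : B \subset M by rewrite -eNB mulG_subr.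
have sNK : N \subset K by apply: subsetIr.
pose fHf h := remgr N B (xs h * gamma h).
have fHB : forall h, h \in H -> fHf h \in B.
  by move=> h Hh; apply: mem_remgr; rewrite eNB MK.
have fHG : forall h, h \in H -> fHf h \in G.
  by move=> h Hh; apply: (subsetP sMG); apply: (subsetP sBM); apply: fHB.
have pifH : forall h, h \in H -> pi (fHf h) = gamma h.
  move=> h Hh; have Mm := MK h Hh.
  have Nd : divgr N B (xs h * gamma h) \in N by apply: mem_divgr; rewrite eNB.
  have -> : fHf h = (divgr N B (xs h * gamma h))^-1 * (xs h * gamma h).
    by rewrite /fHf {3}(divgr_eq N B (xs h * gamma h)) mulKg.
  rewrite /pi remgrMl ?groupV ?(subsetP sNK) //.
  by rewrite remgrMid ?GH ?(proj1 (Exs h Hh)).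
have piMK : forall h, h \in H -> pi (xs h * gamma h) = gamma h.
  by move=> h Hh; rewrite piKH ?GH ?(proj1 (Exs h Hh)).
have fHM : {in H &, {morph fHf : x y / x * y}}.
  move=> h1 h2 H1 H2; rewrite /fHf.
  have M1 := MK h1 H1; have M2 := MK h2 H2; have M12 := MK (h1 * h2) (groupM H1 H2).
  set m1 := xs h1 * gamma h1 in M1 *; set m2 := xs h2 * gamma h2 in M2 *.
  set m12 := xs (h1 * h2) * gamma (h1 * h2) in M12 *.
  have GM1 : m1 \in G by apply: (subsetP sMG).
  have GM2 : m2 \in G by apply: (subsetP sMG).
  have GM12 : m12 \in G by apply: (subsetP sMG).
  have Nn : m12 * (m1 * m2)^-1 \in N.
    have Mn : m12 * (m1 * m2)^-1 \in M by apply: groupM => //; rewrite groupV; apply: groupM.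
    have Gn : m12 * (m1 * m2)^-1 \in G by apply: (subsetP sMG).
    have G12 : m1 * m2 \in G by apply: groupM.
    apply/setIP; split => //; apply: piK => //.
    have pm1 : pi m1 = gamma h1 by apply: piMK.
    have pm2 : pi m2 = gamma h2 by apply: piMK.
    have pm12 : pi m12 = gamma (h1 * h2) by apply: piMK; apply: groupM.
    rewrite piM ?groupV // piV // (piM m1 m2) // pm1 pm2 pm12 GM //.
    by rewrite mulgV.
  have -> : m12 = (m12 * (m1 * m2)^-1) * (m1 * m2) by rewrite mulgKV.
  by rewrite remgrMl //; apply: (remgrM complB nsNM).
pose fH : {morphism H >-> gT} := Morphism fHM.
pose fK := autm AutS.
have fKE : forall k, fK k = sigma k by move=> k; rewrite /fK autmE.
have fHE : forall h, fH h = fHf h by [].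
have actf : {in K & H, morph_act 'J 'J fK fH}.
  move=> x a Kx Ha /=; rewrite !fKE.
  have Mb : fHf a \in M by apply: (subsetP sBM); apply: fHB.
  have E := MP _ a Mb Ha (pifH a Ha) (a^-1 * x * a) (JKi a x Ha Kx).
  have Ex : a * (a^-1 * x * a) * a^-1 = x by rewrite !mulgA mulgV mul1g mulgK.
  rewrite Ex in E; rewrite E !conjgE !mulgA mulVg mul1g mulgKV.
  by [].
pose alpha := sdprodm defG actf.
have injA : 'injm alpha.
  rewrite injm_sdprodm; apply/and3P; split.
  - exact: injm_autm.
  - apply/injmP => h1 h2 H1 H2 e; apply: (@perm_inj _ gamma).
    by rewrite -pifH // -[RHS]pifH //; congr pi; exact: e.
  rewrite im_autm; apply/eqP/trivgP/subsetP => y /setIP[Ky /morphimP[h _ Hh Ey]].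
  rewrite Ey in Ky *; rewrite -tiNB; apply/setIP; split; last exact: fHB.
  by apply/setIP; split => //; apply: (subsetP sBM); apply: fHB.
have imA : alpha @* G = G.
  apply/eqP; rewrite eqEcard card_injm // leqnn andbT.
  rewrite im_sdprodm im_autm -(mulGid G); apply: mulgSS => //.
  by apply/subsetP => y /morphimP[h _ Hh ->]; apply: fHG.
exists (aut injA imA); first exact: Aut_aut.
split.
  move=> k Kk; rewrite autE ?(subsetP sKG) //.
  exact: (sdprodmEl defG actf Kk).
move=> h Hh; rewrite autE ?(subsetP sHG) //.
transitivity (pi (fH h)); last exact: pifH.
by congr (remgr K H _); exact: (sdprodmEr defG actf Hh).
Qed.
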